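(* Let $\mathcal{R}$ be a tolerance relation on $X=\{1,\dots,n\}$ such that $G(\mathcal{R})$ is a connected chordal graph with graph diameter at least $2$. Then $E(\mathcal{R})$ and $E(\mathcal{R})^d$ are not completely order isomorphic (as operator systems).
   Context: A tolerance relation on $X=\{1,\dots,n\}$ is a reflexive symmetric relation $\mathcal{R}\subseteq X\times X$; its graph $G(\mathcal{R})$ has vertex set $X$ and an edge between distinct $i,j$ iff $(i,j)\in\mathcal{R}$. A graph is chordal if every cycle of length at least 4 has a chord. $E(\mathcal{R})=\{(x_{ij})\in M_n(\mathbb{C})\mid x_{ij}=0\text{ if }(i,j)\notin\mathcal{R}\}$ is an operator system with the order inherited from $M_n(\mathbb{C})$ and unit the identity. Its dual operator system $E(\mathcal{R})^d$ is identified with the $*$-vector space $E(\mathcal{R})$ with matrix order $M_m(E(\mathcal{R})^d)_+=\{M\in M_m(E(\mathcal{R}))\mid\exists N\in M_m(E(\mathcal{R})^\perp),\ M+N\in M_{mn}(\mathbb{C})_+\}$, where $E(\mathcal{R})^\perp=\{y\in M_n(\mathbb{C})\mid y_{ij}=0\ \forall(i,j)\in\mathcal{R}\}$, and the identity matrix as order unit. A complete order isomorphism is a unital linear bijection $\varphi$ with $\varphi$ and $\varphi^{-1}$ completely positive. *)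

(* Defs.v *)
From HB Require Import structures.
From mathcomp Require Import all_boot all_order all_algebra complex.
From mathcomp Require Import reals Rstruct.

Set Implicit Arguments. Unset Strict Implicit. Unset Printing Implicit Defensive.
Import Order.TTheory GRing.Theory Num.Theory.
Local Open Scope ring_scope.

Definition C : numClosedFieldType := Rdefinitions.R[i].

Definition tolerance (n : nat) (Rl : rel 'I_n) : Prop :=
  reflexive Rl /\ symmetric Rl.

Definition gadj (n : nat) (Rl : rel 'I_n) : rel 'I_n :=
  fun i j => (i != j) && Rl i j.

Definition gconnected (n : nat) (Rl : rel 'I_n) : Prop :=
  forall i j : 'I_n, connect (gadj Rl) i j.

Definition chordal (n : nat) (Rl : rel 'I_n) : Prop :=
  forall s : seq 'I_n, uniq s -> (4 <= size s)%N -> cycle (gadj Rl) s ->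
    exists x y, [/\ x \in s, y \in s, gadj Rl x y,
                    y != next s x & x != next s y].

Definition dist_ge (n : nat) (Rl : rel 'I_n) (k : nat) (i j : 'I_n) : Prop :=
  forall p : seq 'I_n, path (gadj Rl) i p -> last i p = j -> (k <= size p)%N.

Definition diameter_ge (n : nat) (Rl : rel 'I_n) (k : nat) : Prop :=
  exists i j : 'I_n, dist_ge Rl k i j.

Definition inE (n : nat) (Rl : rel 'I_n) (x : 'M[C]_n) : Prop :=
  forall i j, ~~ Rl i j -> x i j = 0.

Definition inEperp (n : nat) (Rl : rel 'I_n) (y : 'M[C]_n) : Prop :=
  forall i j, Rl i j -> y i j = 0.

Definition psd (k : nat) (M : 'M[C]_k) : Prop :=
  forall v : 'cV[C]_k, 0 <= ((map_mx Num.conj v)^T *m M *m v) 0 0.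

(* An element of M_m(M_n(C)), given by its blocks, viewed in M_{mn}(C). *)
Definition blockmx (n m : nat) (F : 'I_m -> 'I_m -> 'M[C]_n)
  : 'M[C]_(\sum_(i < m) n) :=
  \mxblock_(i < m, j < m) F i j.

Definition posE (n : nat) (Rl : rel 'I_n) (m : nat)
  (F : 'I_m -> 'I_m -> 'M[C]_n) : Prop :=
  (forall i j, inE Rl (F i j)) /\ psd (blockmx F).

Definition posEd (n : nat) (Rl : rel 'I_n) (m : nat)
  (F : 'I_m -> 'I_m -> 'M[C]_n) : Prop :=
  (forall i j, inE Rl (F i j)) /\
  exists N : 'I_m -> 'I_m -> 'M[C]_n,
    (forall i j, inEperp Rl (N i j)) /\
    psd (blockmx (fun i j => F i j + N i j)).

(* A complete order isomorphism phi : E(R) -> E(R)^d (both carried by the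
   *-vector space E(R), unit the identity matrix): a unital linear bijection
   of E(R) such that phi and phi^{-1} are completely positive.  Maps are
   represented by functions on M_n(C), only their behaviour on E(R) matters. *)
Definition complete_order_iso_E_Ed (n : nat) (Rl : rel 'I_n) : Prop :=
  exists phi psi : 'M[C]_n -> 'M[C]_n,
    [/\ (forall x, inE Rl x -> inE Rl (phi x)),
        (forall y, inE Rl y -> inE Rl (psi y)),
        (forall a x y, inE Rl x -> inE Rl y ->
            phi (a *: x + y) = a *: phi x + phi y),
        (forall x, inE Rl x -> psi (phi x) = x) /\
        (forall y, inE Rl y -> phi (psi y) = y)
      & phi 1%:M = 1%:M /\
       (forall m (F : 'I_m -> 'I_m -> 'M[C]_n),
            posE Rl F -> posEd Rl (fun i j => phi (F i j))) /\
        (forall m (F : 'I_m -> 'I_m -> 'M[C]_n),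
            posEd Rl F -> posE Rl (fun i j => psi (F i j)))].

(* Main.v *)
Require Import Defs.
From HB Require Import structures.
From mathcomp Require Import all_boot all_order all_algebra complex ring.
Require Import Defs.
Set Implicit Arguments. Unset Strict Implicit. Unset Printing Implicit Defensive.
Import Order.TTheory GRing.Theory Num.Theory.
Local Open Scope ring_scope.

Lemma conjM (x y : C) : (x * y)^* = x^* * y^*. Proof. exact: rmorphM. Qed.
Lemma conjD (x y : C) : (x + y)^* = x^* + y^*. Proof. exact: rmorphD. Qed.
Lemma conjN (x : C) : (- x)^* = - x^*. Proof. exact: rmorphN. Qed.
Lemma conjB (x y : C) : (x - y)^* = x^* - y^*. Proof. exact: rmorphB. Qed.

Lemma conj_sum k (F : 'I_k -> C) : (\sum_i F i)^* = \sum_i (F i)^*.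
Proof. exact: rmorph_sum. Qed.
Lemma sumD k (F G : 'I_k -> C) : \sum_i (F i + G i) = \sum_i F i + \sum_i G i.
Proof. exact: big_split. Qed.

Definition form (k : nat) (M : 'M[C]_k) (u v : 'I_k -> C) : C :=
  \sum_i \sum_j (u i)^* * M i j * v j.

Lemma eq_form k (M : 'M[C]_k) u u' v v' :
  (forall i, u i = u' i) -> (forall i, v i = v' i) -> form M u v = form M u' v'.
Proof.
move=> eu ev; apply: eq_bigr => i _; apply: eq_bigr => j _.
by rewrite eu ev.
Qed.

Lemma form_psd k (M : 'M[C]_k) (v : 'cV[C]_k) :
  ((map_mx Num.conj v)^T *m M *m v) 0 0 = form M (fun i => v i 0) (fun j => v j 0).
Proof.
rewrite /form !mxE exchange_big /=; apply: eq_bigr => j _; rewrite !mxE big_distrl /=.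
by apply: eq_bigr => i _; rewrite !mxE.
Qed.

Lemma psdP k (M : 'M[C]_k) : psd M <-> forall u, 0 <= form M u u.
Proof.
split=> [H u|H v]; last by rewrite form_psd.
have := H (\col_i u i); rewrite form_psd.
by rewrite (@eq_form _ _ _ u _ u) // => i; rewrite mxE.
Qed.

Section FormLemmas.
Lemma formDr k (M : 'M[C]_k) u v w :
  form M u (fun j => v j + w j) = form M u v + form M u w.
Proof.
rewrite /form -big_split /=; apply: eq_bigr => i _.
by rewrite -big_split /=; apply: eq_bigr => j _; rewrite mulrDr.
Qed.
Lemma formZr k (M : 'M[C]_k) u v a :
  form M u (fun j => a * v j) = a * form M u v.
Proof.
rewrite /form mulr_sumr; apply: eq_bigr => i _.
by rewrite mulr_sumr; apply: eq_bigr => j _; rewrite mulrCA.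
Qed.
Lemma formDl k (M : 'M[C]_k) u w v :
  form M (fun i => u i + w i) v = form M u v + form M w v.
Proof.
rewrite /form -big_split /=; apply: eq_bigr => i _.
by rewrite -big_split /=; apply: eq_bigr => j _; rewrite rmorphD /= !mulrDl.
Qed.
Lemma formZl k (M : 'M[C]_k) u v a :
  form M (fun i => a * u i) v = a^* * form M u v.
Proof.
rewrite /form mulr_sumr; apply: eq_bigr => i _.
by rewrite mulr_sumr; apply: eq_bigr => j _; rewrite rmorphM /= !mulrA.
Qed.

Lemma subr0_eq' (x y : C) : x = y -> x - y = 0.
Proof. by move=> ->; rewrite subrr. Qed.

Lemma form_real k (M : 'M[C]_k) u : 0 <= form M u u -> (form M u u)^* = form M u u.
Proof. by move=> /ger0_real/CrealP. Qed.

Lemma psd_herm k (M : 'M[C]_k) u w : psd M -> form M w u = (form M u w)^*.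
Proof.
move=> /psdP H.
have h1 := form_real (H (fun i => u i + w i)).
have h2 := form_real (H (fun i => u i + 'i * w i)).
rewrite !formDl !formDr !formZl !formZr in h1 h2.
rewrite !rmorphD /= !rmorphM /= ?conjCK ?rmorphN /= ?conjCi ?opprK in h1 h2.
rewrite (form_real (H u)) (form_real (H w)) in h1 h2.
set X := form M u w in h1 h2 *; set Y := form M w u in h1 h2 *.
have {}h1 : (_ - _ = 0) := subr0_eq' h1.
have {}h2 : (_ - _ = 0) := subr0_eq' h2.
have e1 : X^* + Y^* - X - Y = 0 by rewrite -h1; ring.
have e2 : 'i * (Y^* - X^* - X + Y) = 0.
  by rewrite -h2; ring.
move/eqP: e2; rewrite mulf_eq0 (negbTE (@neq0Ci C)) /= => /eqP e2.
have e3 : 2 * (Y^* - X) = 0 by rewrite -[RHS](addr0 0) -{1}e1 -e2; ring.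
move/eqP: e3; rewrite mulf_eq0 pnatr_eq0 /= subr_eq0 => /eqP <-.
by rewrite conjCK.
Qed.

Lemma form_expand k (M : 'M[C]_k) u w (al s : C) :
  form M (fun i => al * u i + s * w i) (fun i => al * u i + s * w i) =
  al^* * al * form M u u + al^* * s * form M u w + s^* * al * form M w u
  + s^* * s * form M w w.
Proof.
rewrite formDl !formDr !formZl !formZr; ring.
Qed.

Lemma CS k (M : 'M[C]_k) u w : psd M ->
  form M u w * (form M u w)^* <= form M u u * form M w w.
Proof.
move=> hM; have H := (psdP M).1 hM.
have hw := psd_herm u w hM.
set a := form M u u; set b := form M u w; set c := form M w w.
have ra : a^* = a := form_real (H u).
have rc : c^* = c := form_real (H w).
have a0 : 0 <= a := H u. have c0 : 0 <= c := H w.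
have [ec|cn0] := eqVneq c 0.
  rewrite ec mulr0.
  have := H (fun i => (b * b^*) * u i + (- ((a + 1) * b^*)) * w i).
  rewrite form_expand -/a -/b -/c hw -/b ec mulr0 addr0.
  rewrite !rmorphN !rmorphM !rmorphD /= !conjCK ra rmorph1.
  have -> : (b^* * b) * (b * b^*) * a + (b^* * b) * - ((a + 1) * b^*) * b
     + - ((a + 1) * b) * (b * b^*) * b^*
     = - ((b * b^*) * (b * b^*) * (a + 2)) by ring.
  rewrite oppr_ge0 => h.
  have a2 : 0 < a + 2 by rewrite ltr_wpDl.
  have : (b * b^*) * (b * b^*) <= 0 by rewrite -(pmulr_lle0 _ a2).



  have r0 : 0 <= b * b^* := mul_conjC_ge0 b.
  move=> hr; have : (b * b^*) * (b * b^*) == 0 by rewrite eq_le hr mulr_ge0.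
  by rewrite mulf_eq0 orbb => /eqP ->.
have cp : 0 < c by rewrite lt_def cn0 c0.
have := H (fun i => c * u i + (- b^*) * w i).
rewrite form_expand -/a -/b -/c hw -/b.
rewrite !rmorphN /= rc conjCK.
have -> : c * c * a + c * - b^* * b + - b * c * b^* + - b * - b^* * c
   = c * (c * a - b * b^*) by ring.
rewrite pmulr_rge0 // subr_ge0 => h; move: h.
by rewrite [c * a]mulrC.
Qed.
End FormLemmas.

Definition delta k (r : 'I_k) : 'I_k -> C := fun i => (i == r)%:R.

Lemma sum_if k (r : 'I_k) (G : 'I_k -> C) :
  \sum_i (if i == r then G i else 0) = G r.
Proof. by rewrite -big_mkcond big_pred1_eq. Qed.

Lemma form_deltal k (M : 'M[C]_k) r v : form M (delta r) v = \sum_j M r j * v j.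
Proof.
rewrite /form -(sum_if r (fun i => \sum_j M i j * v j)); apply: eq_bigr => i _.
rewrite /delta; case: eqP => [->|_].
  by apply: eq_bigr => j _; rewrite rmorph1 mul1r.
by apply: big1 => j _; rewrite rmorph0 !mul0r.
Qed.

Lemma form_delta k (M : 'M[C]_k) r s : form M (delta r) (delta s) = M r s.
Proof.
rewrite form_deltal -(sum_if s (fun j => M r j)); apply: eq_bigr => j _.
by rewrite /delta; case: eqP => _; rewrite ?mulr1 ?mulr0.
Qed.

Lemma CS0 k (M : 'M[C]_k) u z : psd M -> form M z z = 0 -> form M u z = 0.
Proof.
move=> hM hz; have := CS u z hM; rewrite hz mulr0 => h.
have h0 := mul_conjC_ge0 (form M u z).
have : form M u z * (form M u z)^* == 0 by rewrite eq_le h h0.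
by rewrite mul_conjC_eq0 => /eqP.
Qed.

Lemma diag0 k (M : 'M[C]_k) q r : psd M -> M q q = 0 -> M r q = 0 /\ M q r = 0.
Proof.
move=> hM hq; have h : form M (delta q) (delta q) = 0 by rewrite form_delta.
split; first by rewrite -form_delta (CS0 _ hM h).
by rewrite -form_delta (psd_herm _ _ hM) (CS0 _ hM h) rmorph0.
Qed.

Definition idx (n m : nat) (k : 'I_m) (i : 'I_n) : 'I_(\sum_(j < m) n) :=
  @tagnat.Rank m (fun _ => n) k i.

Lemma idx_sig1 n m k i : tagnat.sig1 (@idx n m k i) = k.
Proof. exact: tagnat.Rank1K. Qed.

Lemma idx_sig2 n m k i : (tagnat.sig2 (@idx n m k i) : 'I_n) = i.
Proof. by apply: val_inj; rewrite /idx tagnat.Rank2K. Qed.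

Lemma idx_sig n m (s : 'I_(\sum_(j < m) n)) :
  @idx n m (tagnat.sig1 s) (tagnat.sig2 s) = s.
Proof. exact: tagnat.sig2K. Qed.

Lemma blockmxE n m (F : 'I_m -> 'I_m -> 'M[C]_n) k l i j :
  blockmx F (idx k i) (idx l j) = F k l i j.
Proof. by rewrite /blockmx mxE idx_sig1 idx_sig1 idx_sig2 idx_sig2. Qed.

Lemma idx_inj n m k i l j : @idx n m k i = idx l j -> k = l /\ i = j.
Proof.
move=> e; split; first by rewrite -(idx_sig1 k i) e idx_sig1.
by rewrite -(idx_sig2 k i) e idx_sig2.
Qed.

Lemma walk_P3 n (Rl : rel 'I_n) (i : 'I_n) : forall p x,
  path (gadj Rl) x p -> Rl i x -> ~~ Rl i (last x p) ->
  exists b c, [/\ Rl i b, Rl b c & ~~ Rl i c].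
Proof.
elim=> [|y p IH] x /=; first by move=> _ ->.
move=> /andP [hxy hp] hix hl.
case hiy: (Rl i y); first exact: IH hp hiy hl.
exists x, y; split => //; last by rewrite hiy.
by move: hxy; rewrite /gadj => /andP [].
Qed.

Lemma get_P3 n (Rl : rel 'I_n) : tolerance Rl -> gconnected Rl ->
  diameter_ge Rl 2 -> exists a b c, [/\ Rl a b, Rl b c & ~~ Rl a c].
Proof.
move=> [refl _] hc [i [j hd]].
have nij : ~~ Rl i j.
  apply/negP => hij; have [eij|nij] := eqVneq i j.
    by have := hd [::] isT; rewrite eij => /(_ erefl).
  by have := hd [:: j]; rewrite /= /gadj nij hij => /(_ isT erefl).
have /connectP [p hp ej] := hc i j; rewrite ej in nij.
have [b [c [h1 h2 h3]]] := walk_P3 hp (refl i) nij.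
by exists i, b, c.
Qed.

Definition k0 : 'I_3 := @Ordinal 3 0 isT.
Definition k1 : 'I_3 := @Ordinal 3 1 isT.
Definition k2 : 'I_3 := @Ordinal 3 2 isT.

Definition Bl n m (G : 'I_(\sum_(j < m) n) -> 'I_(\sum_(j < m) n) -> C)
  : 'I_m -> 'I_m -> 'M[C]_n :=
  fun k l => \matrix_(i, j) G (idx k i) (idx l j).

Lemma blockmx_Bl n m G s t : blockmx (@Bl n m G) s t = G s t.
Proof.
by rewrite -(idx_sig s) -(idx_sig t) blockmxE /Bl mxE.
Qed.

Lemma psd_ext k (M M' : 'M[C]_k) : (forall s t, M s t = M' s t) -> psd M -> psd M'.
Proof. by move=> e; have -> : M = M' by apply/matrixP. Qed.

Lemma psd_rank1 k (M : 'M[C]_k) (x : 'I_k -> C) :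
  (forall s t, M s t = (x s)^* * x t) -> psd M.
Proof.
move=> hM; apply/psdP => u.
have -> : form M u u = (\sum_s x s * u s)^* * (\sum_t x t * u t).
  rewrite rmorph_sum mulr_suml; apply: eq_bigr => s _.
  rewrite mulr_sumr; apply: eq_bigr => t _.
  by rewrite hM rmorphM; ring.
by rewrite mulrC mul_conjC_ge0.
Qed.

Notation I3 n := 'I_(\sum_(j < 3) n).

Definition xi n (a b : 'I_n) (ka kb : 'I_3) (s : I3 n) : C :=
  (s == idx ka a)%:R + (s == idx kb b)%:R.

Definition PP n (a b : 'I_n) (ka kb : 'I_3) : 'I_3 -> 'I_3 -> 'M[C]_n :=
  Bl (fun s t => xi a b ka kb s * xi a b ka kb t).

Lemma xi_real n (a b : 'I_n) ka kb s : (xi a b ka kb s)^* = xi a b ka kb s.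
Proof. by rewrite /xi rmorphD /= !conjC_nat. Qed.

Lemma xi_supp n (a b : 'I_n) ka kb k i : xi a b ka kb (idx k i) != 0 ->
  (k == ka) && (i == a) || (k == kb) && (i == b).
Proof.
rewrite /xi; case: (idx k i =P idx ka a) => [/idx_inj [-> ->]|_]; first by rewrite !eqxx.
case: (idx k i =P idx kb b) => [/idx_inj [-> ->]|_]; first by rewrite !eqxx orbT.
by rewrite addr0 eqxx.
Qed.

Lemma posE_PP n (Rl : rel 'I_n) (a b : 'I_n) ka kb :
  tolerance Rl -> Rl a b -> posE Rl (PP a b ka kb).
Proof.
move=> [refl sym] hab; split.
  move=> k l i j hij; rewrite /PP /Bl mxE.
  have [h1|/xi_supp h1] := eqVneq (xi a b ka kb (idx k i)) 0; first by rewrite h1 mul0r.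
  have [h2|/xi_supp h2] := eqVneq (xi a b ka kb (idx l j)) 0; first by rewrite h2 mulr0.
  exfalso; move/negP: hij; apply.
  case/orP: h1 => /andP [_ /eqP ->]; case/orP: h2 => /andP [_ /eqP ->] //.
  by rewrite sym.
apply: (@psd_rank1 _ _ (xi a b ka kb)) => s t.
by rewrite blockmx_Bl xi_real.
Qed.

Lemma posE_ext n (Rl : rel 'I_n) m (F G : 'I_m -> 'I_m -> 'M[C]_n) :
  (forall k l, F k l = G k l) -> posE Rl F -> posE Rl G.
Proof.
move=> e [h1 h2]; split; first by move=> k l; rewrite -e.
by apply: psd_ext h2 => s t; rewrite /blockmx !mxE e.
Qed.

Lemma posEd_ext n (Rl : rel 'I_n) m (F G : 'I_m -> 'I_m -> 'M[C]_n) :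
  (forall k l, F k l = G k l) -> posEd Rl F -> posEd Rl G.
Proof.
move=> e [h1 [N [hN h2]]]; split; first by move=> k l; rewrite -e.
exists N; split => //.
by apply: psd_ext h2 => s t; rewrite /blockmx !mxE e.
Qed.

Lemma idx_neqk n m (k l : 'I_m) (i j : 'I_n) : k != l -> (idx k i == idx l j) = false.
Proof. by move=> kl; apply/eqP => /idx_inj [e _]; rewrite e eqxx in kl. Qed.

Lemma sum_delta k (f : 'I_k -> C) q : \sum_u f u * delta q u = f q.
Proof.
rewrite -(sum_if q f); apply: eq_bigr => u _.
by rewrite /delta; case: eqP => _; rewrite ?mulr1 ?mulr0.
Qed.

Lemma form_comb k (A B M : 'M[C]_k) t v w :
  (forall s u, A s u = t * B s u - M s u) ->
  form A v w = t * form B v w - form M v w.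
Proof.
move=> e; rewrite /form mulr_sumr -sumrB; apply: eq_bigr => s _.
rewrite mulr_sumr -sumrB; apply: eq_bigr => u _.
by rewrite e; ring.
Qed.

Lemma form_two k (x y z : 'I_k -> C) :
  (forall s, (x s)^* = x s) -> (forall s, (y s)^* = y s) ->
  form (\matrix_(s, u) (x s * x u + y s * y u)) z z =
  (\sum_s x s * z s)^* * (\sum_u x u * z u) + (\sum_s y s * z s)^* * (\sum_u y u * z u).
Proof.
move=> rx ry; rewrite !conj_sum !mulr_suml -sumD; apply: eq_bigr => s _.
rewrite !mulr_sumr -sumD; apply: eq_bigr => u _.
by rewrite mxE !conjM rx ry; ring.
Qed.

Lemma psd_diag_real k (M : 'M[C]_k) q : psd M -> (M q q)^* = M q q.
Proof. by move=> /psdP h; rewrite -form_delta form_real. Qed.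

Lemma psd_herm_entry k (M : 'M[C]_k) r s : psd M -> M s r = (M r s)^*.
Proof. by move=> h; rewrite -!form_delta (psd_herm _ _ h). Qed.

Lemma sumB k (F G : 'I_k -> C) : \sum_i (F i - G i) = \sum_i F i - \sum_i G i.
Proof. exact: sumrB. Qed.

Lemma sum_delta3 k (f : 'I_k -> C) p q r :
  \sum_u f u * (delta p u - delta q u + delta r u) = f p - f q + f r.
Proof.
rewrite -!sum_delta -sumB -sumD; apply: eq_bigr => u _; ring.
Qed.

Lemma natb0 (b : bool) : b = false -> (b%:R : C) = 0.
Proof. by move=> ->. Qed.
Lemma natb1 (b : bool) : b = true -> (b%:R : C) = 1.
Proof. by move=> ->. Qed.

Lemma lin_eq (x y : C) : y - x = 0 -> x = y.
Proof. by move/eqP; rewrite subr_eq0 => /eqP. Qed.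

Lemma face_A n (Rl : rel 'I_n) a b c : tolerance Rl -> Rl a b -> Rl b c -> ~~ Rl a c ->
  forall (t : C) (Y : 'I_3 -> 'I_3 -> 'M[C]_n),
  posE Rl Y -> posE Rl (fun k l => t *: (PP a b k0 k1 k l + PP b c k1 k2 k l) - Y k l) ->
  exists mu nu, forall k l, Y k l = mu *: PP a b k0 k1 k l + nu *: PP b c k1 k2 k l.
Proof.
move=> [refl sym] hab hbc hac t Y [hYE hY] [_ hZ].
set x1 := xi a b k0 k1; set x2 := xi b c k1 k2.
set M := blockmx Y in hY.
set Z := blockmx _ in hZ.
have eM : forall k l i j, Y k l i j = M (idx k i) (idx l j).
  by move=> *; rewrite /M blockmxE.
pose B := \matrix_(s, u) (x1 s * x1 u + x2 s * x2 u).
have eZ' : forall k l i j, Z (idx k i) (idx l j) =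
    t * B (idx k i) (idx l j) - Y k l i j.
  by move=> k l i j; rewrite /Z blockmxE !mxE /PP /Bl ?mxE.
have eZ : forall s u, Z s u = t * B s u - M s u.
  by move=> s u; rewrite -(idx_sig s) -(idx_sig u) eZ' -eM.
have ker : forall z, \sum_u x1 u * z u = 0 -> \sum_u x2 u * z u = 0 ->
    forall r, \sum_u M r u * z u = 0.
  move=> z h1 h2 r.
  have fz := form_comb z z eZ.
  rewrite /B form_two ?h1 ?h2 in fz; try by move=> s; rewrite xi_real.
  rewrite !mulr0 addr0 mulr0 sub0r in fz.
  have hz := (psdP Z).1 hZ z; rewrite fz oppr_ge0 in hz.
  have hz2 : form M z z = 0 by apply/eqP; rewrite eq_le hz ((psdP M).1 hY z).
  by rewrite -form_deltal (CS0 _ hY hz2).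
set q0 := idx k0 a; set q1 := idx k1 b; set q2 := idx k2 c.
have n01 : (q0 == q1) = false by apply: idx_neqk.
have n02 : (q0 == q2) = false by apply: idx_neqk.
have n12 : (q1 == q2) = false by apply: idx_neqk.
have n10 : (q1 == q0) = false by rewrite eq_sym.
have n20 : (q2 == q0) = false by rewrite eq_sym.
have n21 : (q2 == q1) = false by rewrite eq_sym.
have v10 : x1 q0 = 1 by rewrite /x1 /xi eqxx n01 addr0.
have v11 : x1 q1 = 1 by rewrite /x1 /xi eqxx n10 add0r.
have v12 : x1 q2 = 0 by rewrite /x1 /xi n20 n21 addr0.
have v20 : x2 q0 = 0 by rewrite /x2 /xi n01 n02 addr0.
have v21 : x2 q1 = 1 by rewrite /x2 /xi eqxx n12 addr0.
have v22 : x2 q2 = 1 by rewrite /x2 /xi eqxx n21 add0r.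
have vout : forall s, s != q0 -> s != q1 -> s != q2 -> x1 s = 0 /\ x2 s = 0.
  move=> s h0 h1 h2; rewrite /x1 /x2 /xi (negbTE h0) (negbTE h1) (negbTE h2).
  by rewrite addr0.
have colQ : forall q r, x1 q = 0 -> x2 q = 0 -> M r q = 0.
  move=> q r h1 h2; have := ker (delta q); rewrite !sum_delta => /(_ h1 h2 r).
  by rewrite sum_delta.
have z0 : forall r, M r q0 - M r q1 + M r q2 = 0.
  move=> r; have := ker (fun u => delta q0 u - delta q1 u + delta q2 u).
  rewrite !sum_delta3 v10 v11 v12 v20 v21 v22 => /(_ _ _ r).
  by rewrite sum_delta3; apply; rewrite ?subrr ?addr0 ?sub0r ?addNr.
have m02 : M q0 q2 = 0 by rewrite /M blockmxE hYE.
have m20 : M q2 q0 = 0 by rewrite /M blockmxE hYE // sym.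
have herm : forall r s, M s r = (M r s)^* by move=> r s; apply: psd_herm_entry.
have r00 : (M q0 q0)^* = M q0 q0 by apply: psd_diag_real.
have r22 : (M q2 q2)^* = M q2 q2 by apply: psd_diag_real.
have m01 : M q0 q1 = M q0 q0.
  by apply: lin_eq; rewrite -(z0 q0) m02; ring.
have m21 : M q2 q1 = M q2 q2.
  by apply: lin_eq; rewrite -(z0 q2) m20; ring.
have m10 : M q1 q0 = M q0 q0 by rewrite herm m01 r00.
have m12 : M q1 q2 = M q2 q2 by rewrite herm m21 r22.
have m11 : M q1 q1 = M q0 q0 + M q2 q2.
  by apply: lin_eq; rewrite -(z0 q1) m10 m12; ring.
have flat : forall s u,
    M s u = M q0 q0 * (x1 s * x1 u) + M q2 q2 * (x2 s * x2 u).
{ have hQ : forall v, v = q0 \/ v = q1 \/ v = q2 \/ (x1 v = 0 /\ x2 v = 0).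
    move=> v; case: (eqVneq v q0) => [->|v0]; first by left.
    case: (eqVneq v q1) => [->|v1]; first by right; left.
    case: (eqVneq v q2) => [->|v2]; first by right; right; left.
    by right; right; right; apply: vout.
  move=> s u.
  case: (hQ u) => [->|[->|[->|[h1 h2]]]]; last by rewrite colQ // h1 h2; ring.
  all: case: (hQ s) => [->|[->|[->|[g1 g2]]]];
    try by rewrite herm colQ // conjC0 g1 g2; ring.
  all: by rewrite ?v10 ?v11 ?v12 ?v20 ?v21 ?v22 ?m01 ?m02 ?m10 ?m11 ?m12 ?m20 ?m21; ring. }
exists (M q0 q0), (M q2 q2) => k l; apply/matrixP => i j.
by rewrite !mxE eM flat /PP /Bl !mxE.
Qed.

Record isoP n (Rl : rel 'I_n) (phi psi : 'M[C]_n -> 'M[C]_n) : Prop := IsoP {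
  iE1 : forall x, inE Rl x -> inE Rl (phi x);
  iE2 : forall y, inE Rl y -> inE Rl (psi y);
  ilin : forall a x y, inE Rl x -> inE Rl y -> phi (a *: x + y) = a *: phi x + phi y;
  iinv1 : forall x, inE Rl x -> psi (phi x) = x;
  iinv2 : forall y, inE Rl y -> phi (psi y) = y;
  icp1 : forall m (F : 'I_m -> 'I_m -> 'M[C]_n),
            posE Rl F -> posEd Rl (fun i j => phi (F i j));
  icp2 : forall m (F : 'I_m -> 'I_m -> 'M[C]_n),
            posEd Rl F -> posE Rl (fun i j => psi (F i j)) }.

Lemma inE0 n (Rl : rel 'I_n) : inE Rl 0.
Proof. by move=> i j _; rewrite mxE. Qed.

Lemma inE_lin n (Rl : rel 'I_n) a x y : inE Rl x -> inE Rl y -> inE Rl (a *: x + y).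
Proof. by move=> hx hy i j h; rewrite !mxE hx // hy // mulr0 addr0. Qed.

Lemma inE_scale n (Rl : rel 'I_n) a x : inE Rl x -> inE Rl (a *: x).
Proof. by move=> hx i j h; rewrite !mxE hx // mulr0. Qed.

Lemma phi0 n Rl phi psi : @isoP n Rl phi psi -> phi 0 = 0.
Proof.
move=> H; have := ilin H 1 (@inE0 _ Rl) (@inE0 _ Rl).
rewrite !scale1r !addr0 => h; apply: (addrI (phi 0)).
by rewrite addr0 -h.
Qed.

Lemma psi0 n Rl phi psi : @isoP n Rl phi psi -> psi 0 = 0.
Proof. by move=> H; rewrite -{1}(phi0 H) (iinv1 H (@inE0 _ Rl)). Qed.

Lemma psi_lin n Rl phi psi : @isoP n Rl phi psi ->
  forall a x y, inE Rl x -> inE Rl y -> psi (a *: x + y) = a *: psi x + psi y.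
Proof.
move=> H a x y hx hy.
rewrite -{1}(iinv2 H hx) -{1}(iinv2 H hy) -(ilin H); try exact: (iE2 H).
by rewrite (iinv1 H) //; apply: inE_lin; exact: (iE2 H).
Qed.

Lemma psi_scale n Rl phi psi : @isoP n Rl phi psi ->
  forall a x, inE Rl x -> psi (a *: x) = a *: psi x.
Proof.
move=> H a x hx; have := psi_lin H a hx (@inE0 _ Rl).
by rewrite !addr0 (psi0 H) addr0.
Qed.

Lemma phi_scale n Rl phi psi : @isoP n Rl phi psi ->
  forall a x, inE Rl x -> phi (a *: x) = a *: phi x.
Proof.
move=> H a x hx; have := ilin H a hx (@inE0 _ Rl).
by rewrite !addr0 (phi0 H) addr0.
Qed.

Lemma face_B n (Rl : rel 'I_n) a b c phi psi :
  tolerance Rl -> Rl a b -> Rl b c -> ~~ Rl a c -> @isoP n Rl phi psi ->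
  forall (t : C) (y : 'I_3 -> 'I_3 -> 'M[C]_n),
  posEd Rl y ->
  posEd Rl (fun k l => t *: (phi (PP a b k0 k1 k l) + phi (PP b c k1 k2 k l)) - y k l) ->
  exists mu nu, forall k l,
    y k l = mu *: phi (PP a b k0 k1 k l) + nu *: phi (PP b c k1 k2 k l).
Proof.
move=> tol hab hbc hac H t y hy hz.
have hP1 := posE_PP k0 k1 tol hab.
have hP2 := posE_PP k1 k2 tol hbc.
have [hx1 _] := icp1 H hP1. have [hx2 _] := icp1 H hP2.
have [hyE _] := hy.
have hY := icp2 H hy.
have hZ := icp2 H hz.
have hZ' : posE Rl (fun k l => t *: (PP a b k0 k1 k l + PP b c k1 k2 k l)
                                 - psi (y k l)).
  apply: posE_ext hZ => k l.
  have -> : t *: (phi (PP a b k0 k1 k l) + phi (PP b c k1 k2 k l)) - y k l =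
    t *: phi (PP a b k0 k1 k l) + (t *: phi (PP b c k1 k2 k l) + (-1) *: y k l).
    by rewrite scalerDr scaleN1r addrA.
  have iy : inE Rl ((-1) *: y k l) by apply: inE_scale.
  have i2 : inE Rl (t *: phi (PP b c k1 k2 k l) + (-1) *: y k l) by apply: inE_lin.
  rewrite (psi_lin H t (hx1 k l) i2) (psi_lin H t (hx2 k l) iy).
  have -> : psi ((-1) *: y k l) = (-1) *: psi (y k l).
    exact: (psi_scale H (-1) (hyE k l)).
  rewrite (iinv1 H (hP1.1 k l)) (iinv1 H (hP2.1 k l)).
  by rewrite scalerDr scaleN1r addrA.
have [mu [nu e]] := face_A tol hab hbc hac hY hZ'.
exists mu, nu => k l.
have i2 : inE Rl (nu *: PP b c k1 k2 k l) by apply: inE_scale; exact: hP2.1.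
rewrite -(iinv2 H (hyE k l)) e (ilin H mu (hP1.1 k l) i2).
by rewrite (phi_scale H nu (hP2.1 k l)).
Qed.

Lemma wit_entry n m (X N : 'I_m -> 'I_m -> 'M[C]_n) k l i j :
  blockmx (fun k l => X k l + N k l) (idx k i) (idx l j) = X k l i j + N k l i j.
Proof. by rewrite blockmxE mxE. Qed.

Lemma wit_diag n (Rl : rel 'I_n) m (X N : 'I_m -> 'I_m -> 'M[C]_n) k i :
  reflexive Rl -> (forall k l, inEperp Rl (N k l)) ->
  blockmx (fun k l => X k l + N k l) (idx k i) (idx k i) = X k k i i.
Proof. by move=> refl hN; rewrite wit_entry hN // addr0. Qed.

Lemma exists_diag n (Rl : rel 'I_n) m (X : 'I_m -> 'I_m -> 'M[C]_n) k :
  reflexive Rl -> posEd Rl X -> X k k != 0 -> exists i, X k k i i != 0.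
Proof.
move=> refl [hX [N [hN hS]]] hne.
case: (pickP (fun i => X k k i i != 0)) => [i hi|h]; first by exists i.
exfalso; move/eqP: hne; apply; apply/matrixP => i j; rewrite mxE.
have hii : forall i, blockmx (fun k l => X k l + N k l) (idx k i) (idx k i) = 0.
  by move=> i'; rewrite (wit_diag _ _ _ refl hN); move/negbFE/eqP: (h i').
have := (diag0 (idx k j) hS (hii i)).2; rewrite wit_entry.
case hij: (Rl i j); first by rewrite hN // addr0.
by rewrite hX ?hij.
Qed.

Lemma form_rank1 k (T : 'M[C]_k) (x v : 'I_k -> C) :
  (forall s t, T s t = (x s)^* * x t) ->
  form T v v = (\sum_s x s * v s)^* * (\sum_t x t * v t).
Proof.
move=> hT; rewrite conj_sum mulr_suml; apply: eq_bigr => s _.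
rewrite mulr_sumr; apply: eq_bigr => t _.
by rewrite hT conjM; ring.
Qed.

Lemma form_comb2 k (W A B M : 'M[C]_k) t v :
  (forall s u, W s u = t * (A s u + B s u) - M s u) ->
  form W v v = t * (form A v v + form B v v) - form M v v.
Proof.
move=> e; rewrite /form -sumD mulr_sumr -sumB; apply: eq_bigr => s _.
rewrite -sumD mulr_sumr -sumB; apply: eq_bigr => u _.
by rewrite e; ring.
Qed.

Lemma inE_comb n (Rl : rel 'I_n) t A B Y :
  inE Rl A -> inE Rl B -> inE Rl Y -> inE Rl (t *: (A + B) - Y).
Proof. by move=> hA hB hY i j h; rewrite !mxE hA // hB // hY // addr0 mulr0 subr0. Qed.

Lemma perp_comb n (Rl : rel 'I_n) t A B Y :
  inEperp Rl A -> inEperp Rl B -> inEperp Rl Y -> inEperp Rl (t *: (A + B) - Y).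
Proof. by move=> hA hB hY i j h; rewrite !mxE hA // hB // hY // addr0 mulr0 subr0. Qed.

Lemma xi_out n (a b : 'I_n) ka kb k i : k != ka -> k != kb -> xi a b ka kb (idx k i) = 0.
Proof. by move=> h1 h2; rewrite /xi !idx_neqk // addr0. Qed.

Lemma PP_out n (a b : 'I_n) ka kb k : k != ka -> k != kb -> PP a b ka kb k k = 0.
Proof.
by move=> h1 h2; apply/matrixP => i j; rewrite /PP /Bl !mxE xi_out // mul0r.
Qed.

Lemma PP_diag n (a b : 'I_n) ka kb : ka != kb -> PP a b ka kb ka ka a a = 1.
Proof.
move=> h; rewrite /PP /Bl mxE /xi eqxx idx_neqk //.
by rewrite addr0 mulr1.
Qed.

Lemma PP_diag2 n (a b : 'I_n) ka kb : ka != kb -> PP a b ka kb kb kb b b = 1.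
Proof.
move=> h; have h' : kb != ka by rewrite eq_sym.
rewrite /PP /Bl mxE /xi eqxx idx_neqk //.
by rewrite add0r mulr1.
Qed.

Lemma PP_mid n (a b c : 'I_n) : PP a b k0 k1 k1 k1 = PP b c k1 k2 k1 k1.
Proof.
apply/matrixP => i j; rewrite /PP /Bl !mxE /xi.
by rewrite (@idx_neqk _ _ k1 k0 i a) // (@idx_neqk _ _ k1 k0 j a) // (@idx_neqk _ _ k1 k2 i c) // (@idx_neqk _ _ k1 k2 j c) // !add0r !addr0.
Qed.

Lemma contra_main n (Rl : rel 'I_n) a b c phi psi :
  tolerance Rl -> Rl a b -> Rl b c -> ~~ Rl a c -> @isoP n Rl phi psi -> False.
Proof.
move=> tol hab hbc hac H; have [refl sym] := tol.
have hP1 := posE_PP k0 k1 tol hab. have hP2 := posE_PP k1 k2 tol hbc.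
have [hx1 [N1 [hN1 hS1]]] := icp1 H hP1.
have [hx2 [N2 [hN2 hS2]]] := icp1 H hP2.
set x1 := fun k l => phi (PP a b k0 k1 k l) in hx1 hS1.
set x2 := fun k l => phi (PP b c k1 k2 k l) in hx2 hS2.
set S1 := blockmx _ in hS1. set S2 := blockmx _ in hS2.
have S1e : forall k l i j, S1 (idx k i) (idx l j) = x1 k l i j + N1 k l i j.
  by move=> *; rewrite /S1 wit_entry.
have S2e : forall k l i j, S2 (idx k i) (idx l j) = x2 k l i j + N2 k l i j.
  by move=> *; rewrite /S2 wit_entry.
have S1d : forall k i, S1 (idx k i) (idx k i) = x1 k k i i.
  by move=> k i; rewrite S1e hN1 // addr0.
have S2d : forall k i, S2 (idx k i) (idx k i) = x2 k k i i.
  by move=> k i; rewrite S2e hN2 // addr0.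
clearbody S1 S2.
have phi_ne0 : forall P, inE Rl P -> P != 0 -> phi P != 0.
  move=> P hP; apply: contra_neq => h.
  by rewrite -(iinv1 H hP) h (psi0 H).
have ne0 : forall (P : 'M[C]_n) i, P i i = 1 -> P != 0.
  by move=> P i h; apply/eqP => e; move: h; rewrite e mxE => /eqP; rewrite eq_sym oner_eq0.
have [i0 hi0] : exists i, x1 k1 k1 i i != 0.
  apply: exists_diag refl (icp1 H hP1) _.
  by apply: phi_ne0 (hP1.1 k1 k1) (ne0 _ _ (PP_diag2 a b (isT : k0 != k1))).
have [j0 hj0] : exists i, x1 k0 k0 i i != 0.
  apply: exists_diag refl (icp1 H hP1) _.
  by apply: phi_ne0 (hP1.1 k0 k0) (ne0 _ _ (PP_diag a b (isT : k0 != k1))).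
have [j2 hj2] : exists i, x2 k2 k2 i i != 0.
  apply: exists_diag refl (icp1 H hP2) _.
  by apply: phi_ne0 (hP2.1 k2 k2) (ne0 _ _ (PP_diag2 b c (isT : k1 != k2))).
have z1 : x1 k2 k2 = 0 by rewrite /x1 PP_out // (phi0 H).
have z2 : x2 k0 k0 = 0 by rewrite /x2 PP_out // (phi0 H).
have mid : x2 k1 k1 = x1 k1 k1 by rewrite /x1 /x2 (PP_mid a b c).
set d := x1 k1 k1 i0 i0.
set p := idx k1 i0. set q := idx k0 j0. set q' := idx k2 j2.
have S1pp : S1 p p = d by rewrite S1d.
have S2pp : S2 p p = d by rewrite S2d mid.
have S2pq : S2 p q = 0.
  by apply: (diag0 p hS2 _).1; rewrite S2d z2 mxE.
have S1pq' : S1 p q' = 0.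
  by apply: (diag0 p hS1 _).1; rewrite S1d z1 mxE.
have dr : d^* = d by rewrite -S1pp psd_diag_real.
have d0 : 0 <= d by rewrite -S1pp -form_delta; exact: (psdP S1).1 hS1 _.
have key : forall lam : C, lam * lam = 1 -> lam^* = lam -> exists mu nu,
  [/\ (d + lam * d)^* * (d + lam * d) = mu * d + nu * d,
      (S1 p q)^* * S1 p q = mu * x1 k0 k0 j0 j0
    & (lam * S2 p q')^* * (lam * S2 p q') = nu * x2 k2 k2 j2 j2].
  move=> lam hl2 hlc.
  pose eta r := S1 p r + lam * S2 p r.
  pose T := \matrix_(r, s) ((eta r)^* * eta s).
  have Te : forall r s, T r s = (eta r)^* * eta s by move=> r s; rewrite mxE.
  have hT : psd T by apply: (psd_rank1 Te).
  pose y := fun k l => \matrix_(i, j) (if Rl i j then T (idx k i) (idx l j) else 0)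
     : 'M[C]_n.
  pose Ny := fun k l => \matrix_(i, j) (if Rl i j then 0 else T (idx k i) (idx l j))
     : 'M[C]_n.
  have hy : posEd Rl y.
    split; first by move=> k l i j h; rewrite mxE (negbTE h).
    exists Ny; split; first by move=> k l i j h; rewrite mxE h.
    apply: psd_ext hT => s u.
    rewrite -(idx_sig s) -(idx_sig u) wit_entry !mxE.
    by case: (Rl _ _); rewrite ?addr0 ?add0r.
  have hz : posEd Rl (fun k l => (2 * d) *: (x1 k l + x2 k l) - y k l).
    split; first by move=> k l; apply: inE_comb; [exact: hx1|exact: hx2|exact: hy.1].
    exists (fun k l => (2 * d) *: (N1 k l + N2 k l) - Ny k l); split.
      move=> k l; apply: perp_comb; [exact: hN1|exact: hN2|].
      by move=> i j h; rewrite mxE h.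
    set W := blockmx _.
    have eW' : forall k l i j, W (idx k i) (idx l j) =
        2 * d * ((x1 k l i j + N1 k l i j) + (x2 k l i j + N2 k l i j))
        - T (idx k i) (idx l j).
      move=> k l i j; rewrite /W blockmxE !mxE.
      by case: (Rl i j); ring.
    have eW : forall s u, W s u = 2 * d * (S1 s u + S2 s u) - T s u.
      by move=> s u; rewrite -(idx_sig s) -(idx_sig u) eW' S1e S2e.
    apply/psdP => v; rewrite (form_comb2 v eW) (form_rank1 v Te).
    have -> : \sum_t eta t * v t = form S1 (delta p) v + lam * form S2 (delta p) v.
      rewrite !form_deltal mulr_sumr -sumD; apply: eq_bigr => t _.
      by rewrite /eta; ring.
    set g1 := form S1 (delta p) v; set g2 := form S2 (delta p) v.
    set f1 := form S1 v v; set f2 := form S2 v v.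
    have cs1 : g1 * g1^* <= d * f1.
      by rewrite -S1pp -form_delta; apply: CS.
    have cs2 : g2 * g2^* <= d * f2.
      by rewrite -S2pp -form_delta; apply: CS.
    have -> : 2 * d * (f1 + f2) - (g1 + lam * g2)^* * (g1 + lam * g2) =
        2 * (d * f1 - g1 * g1^*) + 2 * (d * f2 - g2 * g2^*)
        + (g1 - lam * g2) * (g1 - lam * g2)^*
        + 2 * (1 - lam * lam) * (g2 * g2^*).
      rewrite !conjD !conjM !conjN !conjM hlc; ring.
    rewrite hl2 subrr mulr0 mul0r addr0.
    apply: addr_ge0; last exact: mul_conjC_ge0.
    by apply: addr_ge0; apply: mulr_ge0 => //; rewrite subr_ge0.
  have [mu [nu e]] := face_B tol hab hbc hac H hy hz.
  exists mu, nu; split.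
  - have := congr1 (fun M : 'M[C]_n => M i0 i0) (e k1 k1).
    rewrite !mxE refl -/p /eta S1pp S2pp => ->; congr (_ + _ * _).
    by have := congr1 (fun M : 'M[C]_n => M i0 i0) mid.
  - have := congr1 (fun M : 'M[C]_n => M j0 j0) (e k0 k0).
    rewrite !mxE refl -/p -/q /eta S2pq mulr0 addr0 => ->.
    by have := congr1 (fun M : 'M[C]_n => M j0 j0) z2; rewrite mxE => /= ->; rewrite mulr0 addr0.
  - have := congr1 (fun M : 'M[C]_n => M j2 j2) (e k2 k2).
    rewrite !mxE refl -/p -/q' /eta S1pq' add0r => ->.
    by have := congr1 (fun M : 'M[C]_n => M j2 j2) z1; rewrite mxE => /= ->; rewrite mulr0 add0r.
have [mu1 [nu1 [a1 b1 c1]]] := key 1 (mulr1 1) (conjC1 C).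
have l2 : (-1 : C) * -1 = 1 by rewrite mulrNN mulr1.
have [mu2 [nu2 [a2 b2 c2]]] := key (-1) l2 (conjCN1 C).
have emu : mu1 = mu2.
  by apply: (mulIf hj0); rewrite -b1 -b2.
have enu : nu1 = nu2.
  apply: (mulIf hj2); rewrite -c1 -c2 !conjM (conjCN1 C) (conjC1 C); ring.
move: a1 a2; rewrite emu enu => a1.
have -> : d + -1 * d = 0 by ring.
rewrite conjC0 mul0r -a1 => /esym /eqP.
rewrite mulrC mul_conjC_eq0 mul1r -mulr2n mulrn_eq0 /= => /eqP hd.
by move: hi0; rewrite -/d hd eqxx.
Qed.

Theorem mainTheorem9 (n : nat) (Rl : rel 'I_n) :
  tolerance Rl -> gconnected Rl -> chordal Rl -> diameter_ge Rl 2 ->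
  ~ complete_order_iso_E_Ed Rl.
Proof.
move=> tol hc _ hd [phi [psi [h1 h2 h3 [h4 h5] [_ [h6 h7]]]]].
have [a [b [c [hab hbc hac]]]] := get_P3 tol hc hd.
by apply: (@contra_main n Rl a b c phi psi tol hab hbc hac); split.
Qed.
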